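(* Let $X_1,\dots,X_p$ be metrizable spaces and $B\hookrightarrow A\twoheadrightarrow A/B$ an exact sequence of Polish Abelian groups ($B$ closed in $A$; no continuous cross-section is assumed). Then every almost layered function $f:X_{\le p}\times I^p\to A/B$ has an almost layered lift $F:X_{\le p}\times I^p\to A$.
   Context: Let $I=(0,1]$. A continuous dissection over a metrizable $X$ is a locally finite family $\mathcal{F}$ of continuous functions $X\to[0,1]$ containing $0,1$ (every point has a neighbourhood $U$ with $\{\xi|_U:\xi\in\mathcal{F}\}$ finite); l-complete means closed under pointwise max, min, and pointwise limits of convergent directed families. An $\mathcal{F}$-wedge is $\{(x,t):\xi_1(x)<t\le\xi_2(x)\}$. With $X_{\le i}=X_1\times\cdots\times X_i$, an ascending tuple $(\mathcal{F}_1,\dots,\mathcal{F}_p)$ has $\mathcal{F}_i$ a continuous dissection over $X_{\le i}$; a multiwedge is $\{(x_1,\dots,x_p,t_1,\dots,t_p):(x_1,\dots,x_i,t_i)\in C_i\ \forall i\}$ with $C_i$ an $\mathcal{F}_i$-wedge; minimal = nonempty and inclusion-minimal. A function $\gamma:X_{\le p}\times I^p\to A$ is layered if for some ascending tuple of l-complete continuous dissections it is constant on every minimal multiwedge. For a Polish Abelian group $A$ with a translation-invariant compatible metric $d$ (the resulting notion is independent of this choice), a function is almost layered if it is a uniform limit (in the sup-metric induced by $d$) of layered functions. On $A/B$ one uses the quotient metric. *)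

(* Defs.v *)
From HB Require Import structures.
From mathcomp Require Import all_boot all_algebra.
From Stdlib Require Import Reals List.

Set Implicit Arguments.
Unset Strict Implicit.

Local Open Scope R_scope.

Definition is_metric {T : Type} (d : T -> T -> R) : Prop :=
  (forall x y, 0 <= d x y) /\ (forall x y, d x y = 0 <-> x = y) /\
  (forall x y, d x y = d y x) /\ (forall x y z, d x z <= d x y + d y z).

Definition cauchy_seq {T : Type} (d : T -> T -> R) (u : nat -> T) : Prop :=
  forall eps, 0 < eps -> exists N, forall m n, (N <= m)%nat -> (N <= n)%nat -> d (u m) (u n) < eps.

Definition seq_lim {T : Type} (d : T -> T -> R) (u : nat -> T) (l : T) : Prop :=
  forall eps, 0 < eps -> exists N, forall n, (N <= n)%nat -> d (u n) l < eps.

Definition complete_metric {T : Type} (d : T -> T -> R) : Prop :=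
  forall u, cauchy_seq d u -> exists l, seq_lim d u l.

Definition separable_metric {T : Type} (d : T -> T -> R) : Prop :=
  exists s : nat -> T, forall x eps, 0 < eps -> exists n, d x (s n) < eps.

(* A Polish Abelian group, given together with a translation-invariant compatible
   metric d (every Abelian Polish group admits one, and for Abelian groups any
   such metric is complete). *)
Definition polish_ab_metric (A : zmodType) (d : A -> A -> R) : Prop :=
  is_metric d /\ (forall x y z : A, d (GRing.add x z) (GRing.add y z) = d x y) /\
  complete_metric d /\ separable_metric d.

Definition closed_subgroup (A : zmodType) (d : A -> A -> R) (B : A -> Prop) : Prop :=
  B (GRing.zero : A) /\ (forall x y, B x -> B y -> B (GRing.add x (GRing.opp y))) /\
  (forall (u : nat -> A) l, (forall n, B (u n)) -> seq_lim d u l -> B l).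

Definition quotient_map (A Q : zmodType) (B : A -> Prop) (pi : A -> Q) : Prop :=
  (forall a b, pi (GRing.add a b) = GRing.add (pi a) (pi b)) /\
  (forall q, exists a, pi a = q) /\
  (forall a, pi a = GRing.zero <-> B a).

(* "quotient distance between q and q' is < eps": the quotient metric is
   d_Q(q,q') = inf { d a a' | pi a = q, pi a' = q' }, so this is exactly
   d_Q(q,q') < eps. *)
Definition qdist_lt (A Q : zmodType) (d : A -> A -> R) (pi : A -> Q) (q q' : Q) (eps : R) : Prop :=
  exists a a', pi a = q /\ pi a' = q' /\ d a a' < eps.

(* Spaces are indexed from 0: X 0, ..., X (p-1) play the role of X_1, ..., X_p.
   Pt X n is X_{<= n} = X 0 * ... * X (n-1). *)
Definition Pt (X : nat -> Type) (n : nat) : Type := forall j : nat, lt j n -> X j.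

Definition pball (X : nat -> Type) (dX : forall i, X i -> X i -> R) (n : nat)
  (x : Pt X n) (del : R) (y : Pt X n) : Prop :=
  forall j (h : lt j n), dX j (x j h) (y j h) < del.

Definition pcont (X : nat -> Type) (dX : forall i, X i -> X i -> R) (n : nat)
  (g : Pt X n -> R) : Prop :=
  forall x eps, 0 < eps -> exists del, 0 < del /\
    forall y, pball dX x del y -> Rabs (g y - g x) < eps.

Definition loc_finite (X : nat -> Type) (dX : forall i, X i -> X i -> R) (n : nat)
  (F : (Pt X n -> R) -> Prop) : Prop :=
  forall x, exists del, 0 < del /\ exists L : list (Pt X n -> R),
    forall xi, F xi -> exists eta, In eta L /\
      forall y, pball dX x del y -> xi y = eta y.

Definition cont_dissection (X : nat -> Type) (dX : forall i, X i -> X i -> R) (n : nat)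
  (F : (Pt X n -> R) -> Prop) : Prop :=
  (forall xi, F xi -> pcont dX xi /\ forall x, 0 <= xi x <= 1) /\
  F (fun _ => 0) /\ F (fun _ => 1) /\ loc_finite dX F.

Definition fle {T : Type} (g h : T -> R) : Prop := forall x, g x <= h x.

Definition up_directed {T : Type} (G : (T -> R) -> Prop) : Prop :=
  (exists g, G g) /\
  forall g1 g2, G g1 -> G g2 -> exists g3, G g3 /\ fle g1 g3 /\ fle g2 g3.

Definition down_directed {T : Type} (G : (T -> R) -> Prop) : Prop :=
  (exists g, G g) /\
  forall g1 g2, G g1 -> G g2 -> exists g3, G g3 /\ fle g3 g1 /\ fle g3 g2.

(* pointwise limit of G viewed as a net indexed by itself (ordered by fle) *)
Definition up_net_lim {T : Type} (G : (T -> R) -> Prop) (h : T -> R) : Prop :=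
  forall x eps, 0 < eps -> exists g0, G g0 /\
    forall g, G g -> fle g0 g -> Rabs (g x - h x) < eps.

Definition down_net_lim {T : Type} (G : (T -> R) -> Prop) (h : T -> R) : Prop :=
  forall x eps, 0 < eps -> exists g0, G g0 /\
    forall g, G g -> fle g g0 -> Rabs (g x - h x) < eps.

Definition l_complete {T : Type} (F : (T -> R) -> Prop) : Prop :=
  (forall g h, F g -> F h -> F (fun x => Rmax (g x) (h x))) /\
  (forall g h, F g -> F h -> F (fun x => Rmin (g x) (h x))) /\
  (forall G h, (forall g, G g -> F g) -> up_directed G -> up_net_lim G h -> F h) /\
  (forall G h, (forall g, G g -> F g) -> down_directed G -> down_net_lim G h -> F h).

Definition Iu : Type := {t : R | 0 < t <= 1}.

Definition is_wedge {T : Type} (F : (T -> R) -> Prop) (C : T -> Iu -> Prop) : Prop :=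
  exists xi1 xi2, F xi1 /\ F xi2 /\
    forall x t, C x t <-> (xi1 x < proj1_sig t /\ proj1_sig t <= xi2 x).

Definition Dom (X : nat -> Type) (p : nat) : Type :=
  (Pt X p * (forall j : nat, lt j p -> Iu))%type.

Definition restr (X : nat -> Type) (p k : nat) (hk : lt k p) (x : Pt X p) : Pt X (S k) :=
  fun j hj => x j (Nat.lt_le_trans j (S k) p hj hk).

(* An ascending tuple (F_1,...,F_p) is Fs 0, ..., Fs (p-1), with Fs k a family
   of functions on X_{<= k+1}. *)
Definition is_multiwedge (X : nat -> Type) (p : nat)
  (Fs : forall k : nat, (Pt X (S k) -> R) -> Prop) (M : Dom X p -> Prop) : Prop :=
  exists Cs : forall k : nat, Pt X (S k) -> Iu -> Prop,
    (forall k, lt k p -> is_wedge (Fs k) (Cs k)) /\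
    forall z : Dom X p,
      M z <-> (forall k (hk : lt k p), Cs k (restr hk (fst z)) (snd z k hk)).

Definition minimal_multiwedge (X : nat -> Type) (p : nat)
  (Fs : forall k : nat, (Pt X (S k) -> R) -> Prop) (M : Dom X p -> Prop) : Prop :=
  is_multiwedge Fs M /\ (exists z, M z) /\
  forall M', is_multiwedge Fs M' -> (exists z, M' z) ->
    (forall z, M' z -> M z) -> forall z, M z -> M' z.

Definition layered (X : nat -> Type) (dX : forall i, X i -> X i -> R) (p : nat)
  {V : Type} (gam : Dom X p -> V) : Prop :=
  exists Fs : forall k : nat, (Pt X (S k) -> R) -> Prop,
    (forall k, lt k p -> cont_dissection dX (Fs k) /\ l_complete (Fs k)) /\
    forall M, minimal_multiwedge Fs M ->
      forall z z', M z -> M z' -> gam z = gam z'.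

Definition almost_layered (X : nat -> Type) (dX : forall i, X i -> X i -> R) (p : nat)
  (A : zmodType) (d : A -> A -> R) (F : Dom X p -> A) : Prop :=
  forall eps, 0 < eps -> exists g : Dom X p -> A,
    layered dX g /\ forall z, d (F z) (g z) < eps.

Definition almost_layered_q (X : nat -> Type) (dX : forall i, X i -> X i -> R) (p : nat)
  (A Q : zmodType) (d : A -> A -> R) (pi : A -> Q) (f : Dom X p -> Q) : Prop :=
  forall eps, 0 < eps -> exists g : Dom X p -> Q,
    layered dX g /\ forall z, qdist_lt d pi (f z) (g z) eps.

(* Main.v *)
Require Import Defs.
From mathcomp Require Import all_boot all_algebra.
From Stdlib Require Import Reals Lra List ClassicalEpsilon Classical ProofIrrelevance.

Local Open Scope R_scope.

Lemma abs_eps_eq (a b : R) : (forall eps, 0 < eps -> Rabs (a - b) < eps) -> a = b.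
Proof.
  intro H. destruct (Req_dec a b) as [e|ne]; auto.
  exfalso. assert (Hp : 0 < Rabs (a - b)) by (apply Rabs_pos_lt; lra).
  specialize (H _ Hp). lra.
Qed.

Lemma Rmax_close a b c e (eps : R) :
  Rabs (a - c) < eps -> Rabs (b - e) < eps -> Rabs (Rmax a b - Rmax c e) < eps.
Proof.
  intros H1 H2. apply Rabs_def2 in H1. apply Rabs_def2 in H2.
  apply Rabs_def1; unfold Rmax; destruct (Rle_dec a b); destruct (Rle_dec c e); lra.
Qed.

Lemma Rmin_close a b c e (eps : R) :
  Rabs (a - c) < eps -> Rabs (b - e) < eps -> Rabs (Rmin a b - Rmin c e) < eps.
Proof.
  intros H1 H2. apply Rabs_def2 in H1. apply Rabs_def2 in H2.
  apply Rabs_def1; unfold Rmin; destruct (Rle_dec a b); destruct (Rle_dec c e); lra.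
Qed.

Section Level.
Variable (X : nat -> Type) (dX : forall i, X i -> X i -> R) (n : nat).
Hypothesis Hd0 : forall j (a : X j), lt j n -> dX j a a = 0.
Notation T := (Pt X n).

Lemma pball_self (x : T) del : 0 < del -> pball dX x del x.
Proof. intros H j hj. rewrite Hd0; auto. Qed.

Lemma pball_mono (x y : T) d1 d2 : d1 <= d2 -> pball dX x d1 y -> pball dX x d2 y.
Proof. intros H P j hj. specialize (P j hj). lra. Qed.

Lemma pcont_max (g h : T -> R) : pcont dX g -> pcont dX h -> pcont dX (fun x => Rmax (g x) (h x)).
Proof.
  intros Hg Hh x eps He. destruct (Hg x eps He) as [d1 [Hd1 P1]].
  destruct (Hh x eps He) as [d2 [Hd2 P2]].
  exists (Rmin d1 d2). split. apply Rmin_glb_lt; auto.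
  intros y Hy. apply Rmax_close.
  apply P1. eapply pball_mono; [|exact Hy]. apply Rmin_l.
  apply P2. eapply pball_mono; [|exact Hy]. apply Rmin_r.
Qed.

Lemma pcont_min (g h : T -> R) : pcont dX g -> pcont dX h -> pcont dX (fun x => Rmin (g x) (h x)).
Proof.
  intros Hg Hh x eps He. destruct (Hg x eps He) as [d1 [Hd1 P1]].
  destruct (Hh x eps He) as [d2 [Hd2 P2]].
  exists (Rmin d1 d2). split. apply Rmin_glb_lt; auto.
  intros y Hy. apply Rmin_close.
  apply P1. eapply pball_mono; [|exact Hy]. apply Rmin_l.
  apply P2. eapply pball_mono; [|exact Hy]. apply Rmin_r.
Qed.


Definition Rleb (a b : R) : bool := if Rle_dec a b then true else false.
Notation patT m := {ffun 'I_m * 'I_m -> bool}.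
Notation selT m := {ffun patT m -> 'I_m}.
Definition nthf (L : list (T -> R)) (i : nat) (y : T) : R := List.nth i L (fun _ => 0) y.
Definition pat (L : list (T -> R)) (y : T) : patT (length L) :=
  [ffun ij : 'I_(length L) * 'I_(length L) => Rleb (nthf L (ij.1 : nat) y) (nthf L (ij.2 : nat) y)].
Definition sel (L : list (T -> R)) (c : selT (length L)) (y : T) : R :=
  nthf L (c (pat L y) : nat) y.

Definition cmax {m} (c1 c2 : selT m) : selT m :=
  [ffun P : patT m => if P (c1 P, c2 P) then c2 P else c1 P].
Definition cmin {m} (c1 c2 : selT m) : selT m :=
  [ffun P : patT m => if P (c1 P, c2 P) then c1 P else c2 P].

Lemma sel_max L c1 c2 y : sel L (cmax c1 c2) y = Rmax (sel L c1 y) (sel L c2 y).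
Proof.
  unfold sel, cmax, Rmax. rewrite ffunE. unfold pat at 1. rewrite ffunE /= /Rleb.
  destruct (Rle_dec _ _); reflexivity.
Qed.

Lemma sel_min L c1 c2 y : sel L (cmin c1 c2) y = Rmin (sel L c1 y) (sel L c2 y).
Proof.
  unfold sel, cmin, Rmin. rewrite ffunE. unfold pat at 1. rewrite ffunE /= /Rleb.
  destruct (Rle_dec _ _); reflexivity.
Qed.

Lemma in_In (U : eqType) (s : seq.seq U) x : x \in s -> List.In x s.
Proof.
  elim: s => [|a s IH] //=. rewrite seq.in_cons => /orP [/eqP ->|H]; [left|right]; auto.
Qed.

Lemma In_enum (U : finType) (x : U) : List.In x (enum U).
Proof. apply in_In. by rewrite mem_enum. Qed.


Variable K : (T -> R) -> Prop.
Hypothesis HK : forall xi, K xi -> pcont dX xi /\ forall x, 0 <= xi x <= 1.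
Hypothesis HKlf : loc_finite dX K.

Definition spec (x : T) del (L : list (T -> R)) : Prop :=
  0 < del /\ forall xi, K xi -> exists eta, In eta L /\ forall y, pball dX x del y -> xi y = eta y.

Definition Hfam (h : T -> R) : Prop :=
  pcont dX h /\ (forall x, 0 <= h x <= 1) /\
  forall x del L, spec x del L -> exists c : selT (length L),
    forall y, pball dX x del y -> h y = sel L c y.

Lemma K_Hfam xi : K xi -> Hfam xi.
Proof.
  intro Hxi. destruct (HK xi Hxi) as [Hc Hb]. split; [|split]; auto.
  intros x del L [Hdel HL]. destruct (HL xi Hxi) as [eta [Hin Heq]].
  destruct (In_nth _ _ (fun _ => 0) Hin) as [i [Hi Hnth]].
  have Hi' : (i < length L)%nat by apply/ltP.
  exists [ffun _ => Ordinal Hi']. intros y Hy. unfold sel, nthf. rewrite ffunE /= Hnth. auto.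
Qed.

Lemma Hfam_max g h : Hfam g -> Hfam h -> Hfam (fun x => Rmax (g x) (h x)).
Proof.
  intros [Hg1 [Hg2 Hg3]] [Hh1 [Hh2 Hh3]]. split; [|split].
  apply pcont_max; auto.
  intro x. specialize (Hg2 x). specialize (Hh2 x). unfold Rmax. destruct (Rle_dec _ _); lra.
  intros x del L Hs. destruct (Hg3 x del L Hs) as [c1 P1]. destruct (Hh3 x del L Hs) as [c2 P2].
  exists (cmax c1 c2). intros y Hy. rewrite sel_max P1 ?P2; auto.
Qed.

Lemma Hfam_min g h : Hfam g -> Hfam h -> Hfam (fun x => Rmin (g x) (h x)).
Proof.
  intros [Hg1 [Hg2 Hg3]] [Hh1 [Hh2 Hh3]]. split; [|split].
  apply pcont_min; auto.
  intro x. specialize (Hg2 x). specialize (Hh2 x). unfold Rmin. destruct (Rle_dec _ _); lra.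
  intros x del L Hs. destruct (Hg3 x del L Hs) as [c1 P1]. destruct (Hh3 x del L Hs) as [c2 P2].
  exists (cmin c1 c2). intros y Hy. rewrite sel_min P1 ?P2; auto.
Qed.

Lemma Hfam_lf : loc_finite dX Hfam.
Proof.
  intro x. destruct (HKlf x) as [del [Hdel [L HL]]].
  have Hs : spec x del L by split.
  exists del. split; auto. exists (List.map (sel L) (enum (selT (length L)))).
  intros h [_ [_ Hh]]. destruct (Hh x del L Hs) as [c Pc].
  exists (sel L c). split; auto. apply in_map. apply In_enum.
Qed.

Lemma Hfam_lim (le : R -> R -> Prop)
  (Hanti : forall a b, le a b -> le b a -> a = b)
  (Htr : forall a b c, le a b -> le b c -> le a c)
  (G : (T -> R) -> Prop) (h : T -> R) :
  (forall g, G g -> Hfam g) -> (exists g, G g) ->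
  (forall g1 g2, G g1 -> G g2 -> exists g3, G g3 /\ (forall x, le (g1 x) (g3 x)) /\ (forall x, le (g2 x) (g3 x))) ->
  (forall x eps, 0 < eps -> exists g0, G g0 /\ forall g, G g -> (forall y, le (g0 y) (g y)) -> Rabs (g x - h x) < eps) ->
  Hfam h.
Proof.
  intros HGH [g0 Hg0] Hdir Hlim.
  assert (Key : forall x del L, spec x del L -> exists gs, G gs /\ forall y, pball dX x del y -> h y = gs y).
  { intros x del L Hs.
    assert (Fold : forall S : list (selT (length L)), exists g', G g' /\
      forall c, In c S -> forall g, G g -> (forall y, pball dX x del y -> g y = sel L c y) ->
        forall y, pball dX x del y -> le (g y) (g' y)).
    { induction S as [|c S IH].
      - exists g0. split; auto. intros c [].
      - destruct IH as [g' [Hg' P']].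
        destruct (classic (exists gc, G gc /\ forall y, pball dX x del y -> gc y = sel L c y)) as [[gc [Hgc Pgc]]|Nc].
        + destruct (Hdir g' gc Hg' Hgc) as [g3 [Hg3 [L1 L2]]].
          exists g3. split; auto. intros c0 [<-|Hin] g Hg Pg y Hy.
          * rewrite Pg // -Pgc //.
          * eapply Htr; [eapply P'; eauto|]. apply L1.
        + exists g'. split; auto. intros c0 [<-|Hin] g Hg Pg y Hy.
          * exfalso. apply Nc. exists g. split; auto.
          * eapply P'; eauto. }
    destruct (Fold (enum (selT (length L)))) as [gs [Hgs Pgs]].
    exists gs. split; auto.
    assert (Stab : forall g, G g -> (forall y, le (gs y) (g y)) -> forall y, pball dX x del y -> g y = gs y).
    { intros g Hg Hle y Hy. destruct (HGH g Hg) as [_ [_ Hg3]].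
      destruct (Hg3 x del L Hs) as [c Pc].
      apply Hanti; auto. eapply Pgs; eauto. apply In_enum. }
    intros y Hy. symmetry. apply abs_eps_eq. intros eps He.
    destruct (Hlim y eps He) as [g1 [Hg1 P1]].
    destruct (Hdir g1 gs Hg1 Hgs) as [g3 [Hg3 [L1 L2]]].
    rewrite -(Stab g3 Hg3 L2 y Hy). apply P1; auto. }
  split; [|split].
  - intros x eps He. destruct (HKlf x) as [del [Hdel [L HL]]].
    have Hs : spec x del L by split.
    destruct (Key x del L Hs) as [gs [Hgs Pgs]].
    destruct (HGH gs Hgs) as [Hc _]. destruct (Hc x eps He) as [d1 [Hd1 P1]].
    exists (Rmin d1 del). split. apply Rmin_glb_lt; auto.
    intros y Hy. rewrite !Pgs. apply P1. eapply pball_mono; [|exact Hy]. apply Rmin_l.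
    apply pball_self; auto. eapply pball_mono; [|exact Hy]. apply Rmin_r.
  - intro x. destruct (HKlf x) as [del [Hdel [L HL]]].
    have Hs : spec x del L by split.
    destruct (Key x del L Hs) as [gs [Hgs Pgs]].
    rewrite Pgs. apply (HGH gs Hgs). apply pball_self; auto.
  - intros x del L Hs. destruct (Key x del L Hs) as [gs [Hgs Pgs]].
    destruct (HGH gs Hgs) as [_ [_ Hg3]]. destruct (Hg3 x del L Hs) as [c Pc].
    exists c. intros y Hy. rewrite Pgs; auto.
Qed.

End Level.

Lemma level_refine (X : nat -> Type) (dX : forall i, X i -> X i -> R) (n : nat)
  (Hd0 : forall j (a : X j), lt j n -> dX j a a = 0)
  (F G : (Pt X n -> R) -> Prop) :
  cont_dissection dX F -> cont_dissection dX G ->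
  exists H, cont_dissection dX H /\ l_complete H /\ (forall xi, F xi -> H xi) /\ (forall xi, G xi -> H xi).
Proof.
  intros [F1 [F2 [F3 F4]]] [G1 [G2 [G3 G4]]].
  set K := fun xi => F xi \/ G xi.
  have HK : forall xi, K xi -> pcont dX xi /\ forall x, 0 <= xi x <= 1.
  { intros xi [H|H]; auto. }
  have HKlf : loc_finite dX K.
  { intro x. destruct (F4 x) as [d1 [Hd1 [L1 P1]]]. destruct (G4 x) as [d2 [Hd2 [L2 P2]]].
    exists (Rmin d1 d2). split. apply Rmin_glb_lt; auto. exists (L1 ++ L2).
    intros xi [H|H].
    - destruct (P1 xi H) as [eta [Hin Heq]]. exists eta. split. apply in_or_app; auto.
      intros y Hy. apply Heq. eapply pball_mono; [|exact Hy]. apply Rmin_l.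
    - destruct (P2 xi H) as [eta [Hin Heq]]. exists eta. split. apply in_or_app; auto.
      intros y Hy. apply Heq. eapply pball_mono; [|exact Hy]. apply Rmin_r. }
  exists (Hfam X dX n K). split; [|split; [|split]].
  - split; [|split; [|split]].
    + intros xi [H1 [H2 _]]. auto.
    + apply (K_Hfam X dX n K HK); auto. left; auto.
    + apply (K_Hfam X dX n K HK); auto. left; auto.
    + apply (Hfam_lf X dX n K HKlf).
  - split; [|split; [|split]].
    + intros g h; apply (Hfam_max X dX n K).
    + intros g h; apply (Hfam_min X dX n K).
    + intros GG h HG [Hne Hdir] Hl.
      apply (Hfam_lim X dX n Hd0 K HKlf Rle) with (G := GG); auto.
      * intros; apply Rle_antisym; auto.
      * intros; eapply Rle_trans; eauto.
    + intros GG h HG [Hne Hdir] Hl.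
      apply (Hfam_lim X dX n Hd0 K HKlf (fun a b => b <= a)) with (G := GG); auto.
      * intros; apply Rle_antisym; auto.
      * intros; simpl in *; eapply Rle_trans; eauto.
  - intros xi H; apply (K_Hfam X dX n K HK); auto. left; auto.
  - intros xi H; apply (K_Hfam X dX n K HK); auto. right; auto.
Qed.

Lemma list_max_below (T : Type) (L : list (T -> R)) (x : T) (t : R) : 0 < t ->
  exists m, m < t /\ forall eta, In eta L -> eta x < t -> eta x <= m.
Proof.
  intro ht. induction L as [|e L [m [Hm Pm]]].
  - exists 0. split; auto. intros eta [].
  - destruct (Rlt_dec (e x) t) as [Hl|Hn].
    + exists (Rmax m (e x)). split. apply Rmax_lub_lt; auto.
      intros eta [<-|Hin] Heta. apply Rmax_r. eapply Rle_trans; [apply Pm; auto|apply Rmax_l].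
    + exists m. split; auto. intros eta [<-|Hin] Heta. contradiction. auto.
Qed.

Lemma lub_approx (E : R -> Prop) m eps : is_lub E m -> 0 < eps -> exists r, E r /\ m - eps < r.
Proof.
  intros [Hu Hl] He. apply NNPP. intro N.
  assert (m <= m - eps). { apply Hl. intros r Er. apply Rnot_lt_le. intro C. apply N. exists r. auto. }
  lra.
Qed.

Lemma ext_low (X : nat -> Type) (dX : forall i, X i -> X i -> R) (n : nat)
  (Hd0 : forall j (a : X j), lt j n -> dX j a a = 0)
  (F : (Pt X n -> R) -> Prop) :
  cont_dissection dX F -> l_complete F -> forall (x : Pt X n) (t : R), 0 < t ->
  exists xi1, F xi1 /\ xi1 x < t /\ forall xi, F xi -> xi x < t -> fle xi xi1.
Proof.
  intros [F1 [F2 [F3 F4]]] [L1 [L2 [L3 L4]]] x t ht.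
  set G := fun xi : Pt X n -> R => F xi /\ xi x < t.
  set E := fun y r => exists xi, G xi /\ r = xi y.
  have Eb : forall y, bound (E y).
  { intro y. exists 1. intros r [xi [[Hxi _] ->]]. apply (F1 xi Hxi). }
  have Ene : forall y, exists r, E y r.
  { intro y. exists 0. exists (fun _ => 0). split; auto. split; auto. }
  set h := fun y => proj1_sig (completeness (E y) (Eb y) (Ene y)).
  have Hh : forall y, is_lub (E y) (h y).
  { intro y. exact (proj2_sig (completeness (E y) (Eb y) (Ene y))). }
  have Hub : forall xi, G xi -> fle xi h.
  { intros xi Hxi y. apply (Hh y). exists xi. auto. }
  have Fh : F h.
  { apply (L3 G h). intros g [Hg _]; auto.
    - split. exists (fun _ => 0). split; auto.
      intros g1 g2 [Hg1 T1] [Hg2 T2]. exists (fun y => Rmax (g1 y) (g2 y)).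
      split; [split|split]. apply L1; auto. apply Rmax_lub_lt; auto.
      intro y; apply Rmax_l. intro y; apply Rmax_r.
    - intros y eps He. destruct (lub_approx _ _ _ (Hh y) He) as [r [[xi [Gxi ->]] Hr]].
      exists xi. split; auto. intros g Gg Hle.
      have := Hle y. have := Hub g Gg y. intros. apply Rabs_def1; lra. }
  exists h. split; auto. split.
  - destruct (F4 x) as [del [Hdel [L HL]]].
    destruct (list_max_below _ L x t ht) as [m [Hm Pm]].
    apply Rle_lt_trans with m; auto. apply (Hh x). intros r [xi [[Hxi Hxt] ->]].
    destruct (HL xi Hxi) as [eta [Hin Heq]]. have Ex : xi x = eta x by apply Heq; apply (pball_self X dX n Hd0).
    rewrite Ex in Hxt |- *. apply Pm; auto.
  - intros xi Hxi Hxt. apply Hub. split; auto.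
Qed.

Lemma ext_high (X : nat -> Type) (dX : forall i, X i -> X i -> R) (n : nat)
  (F : (Pt X n -> R) -> Prop) :
  cont_dissection dX F -> l_complete F -> forall (x : Pt X n) (t : R), t <= 1 ->
  exists xi2, F xi2 /\ t <= xi2 x /\ forall xi, F xi -> t <= xi x -> fle xi2 xi.
Proof.
  intros [F1 [F2 [F3 F4]]] [L1 [L2 [L3 L4]]] x t ht.
  set G := fun xi : Pt X n -> R => F xi /\ t <= xi x.
  set E := fun y r => exists xi, G xi /\ r = - xi y.
  have Eb : forall y, bound (E y).
  { intro y. exists 0. intros r [xi [[Hxi _] ->]]. have := proj2 (F1 xi Hxi) y. lra. }
  have Ene : forall y, exists r, E y r.
  { intro y. exists (-1). exists (fun _ => 1). split; auto. split; auto. }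
  set h := fun y => - proj1_sig (completeness (E y) (Eb y) (Ene y)).
  have Hh : forall y, is_lub (E y) (- h y).
  { intro y. rewrite /h Ropp_involutive. exact (proj2_sig (completeness (E y) (Eb y) (Ene y))). }
  have Hlb : forall xi, G xi -> fle h xi.
  { intros xi Hxi y. have : - xi y <= - h y. apply (Hh y). exists xi. auto. lra. }
  have Fh : F h.
  { apply (L4 G h). intros g [Hg _]; auto.
    - split. exists (fun _ => 1). split; auto.
      intros g1 g2 [Hg1 T1] [Hg2 T2]. exists (fun y => Rmin (g1 y) (g2 y)).
      split; [split|split]. apply L2; auto. apply Rmin_glb; auto.
      intro y; apply Rmin_l. intro y; apply Rmin_r.
    - intros y eps He. destruct (lub_approx _ _ _ (Hh y) He) as [r [[xi [Gxi ->]] Hr]].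
      exists xi. split; auto. intros g Gg Hle.
      have := Hle y. have := Hlb g Gg y. intros. apply Rabs_def1; lra. }
  exists h. split; auto. split.
  - have : - h x <= - t. apply (Hh x). intros r [xi [[Hxi Hxt] ->]]. lra. lra.
  - intros xi Hxi Hxt. apply Hlb. split; auto.
Qed.

Lemma cell_mono (T : Type) (F : (T -> R) -> Prop)
  (Lmax : forall g h, F g -> F h -> F (fun x => Rmax (g x) (h x)))
  (Lmin : forall g h, F g -> F h -> F (fun x => Rmin (g x) (h x)))
  (x x' : T) (t t' : R) (xi1 xi2 xi1' xi2' : T -> R) :
  F xi1 -> F xi2 -> xi1 x < t -> t <= xi2 x ->
  (forall xi, F xi -> xi x < t -> fle xi xi1) ->
  (forall xi, F xi -> t <= xi x -> fle xi2 xi) ->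
  F xi1' -> F xi2' -> xi1' x' < t' -> t' <= xi2' x' ->
  xi1 x' < t' -> t' <= xi2 x' ->
  fle xi1' xi1 /\ fle xi2 xi2'.
Proof.
  intros F1 F2 H1 H2 E1 E2 F1' F2' H1' H2' C1 C2. split.
  - apply E1; auto. apply Rnot_le_lt. intro Hc.
    set xi'' := fun y => Rmax (xi1 y) (Rmin (xi1' y) (xi2 y)).
    have Fx : F xi'' by apply Lmax; auto.
    have Le : fle xi2 xi''.
    { apply E2; auto. unfold xi''. eapply Rle_trans; [|apply Rmax_r]. apply Rmin_glb; lra. }
    have := Le x'. unfold xi''.
    have : Rmax (xi1 x') (Rmin (xi1' x') (xi2 x')) < t'.
    { apply Rmax_lub_lt; auto. eapply Rle_lt_trans; [apply Rmin_l|]; auto. }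
    lra.
  - apply E2; auto. apply Rnot_lt_le. intro Hc.
    set xi'' := fun y => Rmin (xi2 y) (Rmax (xi2' y) (xi1 y)).
    have Fx : F xi'' by apply Lmin; auto.
    have Le : fle xi'' xi1.
    { apply E1; auto. unfold xi''. eapply Rle_lt_trans; [apply Rmin_r|]. apply Rmax_lub_lt; lra. }
    have := Le x'. unfold xi''.
    have : t' <= Rmin (xi2 x') (Rmax (xi2' x') (xi1 x')).
    { apply Rmin_glb; auto. eapply Rle_trans; [|apply Rmax_l]; auto. }
    lra.
Qed.

Section Cells.
Variable (X : nat -> Type) (dX : forall i, X i -> X i -> R) (p : nat).
Hypothesis Hd : forall j (a : X j), lt j p -> dX j a a = 0.

Definition xk (z : Dom X p) k (hk : lt k p) : Pt X (S k) := restr hk (fst z).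
Definition tk (z : Dom X p) k (hk : lt k p) : R := proj1_sig (snd z k hk).

Definition famprops (Fs : forall k : nat, (Pt X (S k) -> R) -> Prop) :=
  forall k, lt k p -> cont_dissection dX (Fs k) /\ l_complete (Fs k).

Definition cellspec (Fs : forall k : nat, (Pt X (S k) -> R) -> Prop) (z : Dom X p)
  (xi1s xi2s : forall k, Pt X (S k) -> R) : Prop :=
  forall k (hk : lt k p), Fs k (xi1s k) /\ Fs k (xi2s k) /\
    xi1s k (xk z k hk) < tk z k hk /\ tk z k hk <= xi2s k (xk z k hk) /\
    (forall xi, Fs k xi -> xi (xk z k hk) < tk z k hk -> fle xi (xi1s k)) /\
    (forall xi, Fs k xi -> tk z k hk <= xi (xk z k hk) -> fle (xi2s k) xi).

Lemma cell_exists Fs : famprops Fs -> forall z, exists xi1s xi2s, cellspec Fs z xi1s xi2s.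
Proof.
  intros HF z.
  have Ex : forall k, exists pr : (Pt X (S k) -> R) * (Pt X (S k) -> R),
    forall hk : lt k p, Fs k pr.1 /\ Fs k pr.2 /\
    pr.1 (xk z k hk) < tk z k hk /\ tk z k hk <= pr.2 (xk z k hk) /\
    (forall xi, Fs k xi -> xi (xk z k hk) < tk z k hk -> fle xi pr.1) /\
    (forall xi, Fs k xi -> tk z k hk <= xi (xk z k hk) -> fle pr.2 xi).
  { intro k. destruct (Compare_dec.lt_dec k p) as [hk0|nk].
    - destruct (HF k hk0) as [Hc Hl].
      have Hd0 : forall j (a : X j), lt j (S k) -> dX j a a = 0.
      { intros j a hj. apply Hd. eapply Nat.lt_le_trans; eauto. }
      have Ht := proj2_sig (snd z k hk0).
      destruct (ext_low X dX (S k) Hd0 (Fs k) Hc Hl (xk z k hk0) (tk z k hk0)) as [xi1 [A1 [A2 A3]]].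
      { unfold tk. simpl in Ht. lra. }
      destruct (ext_high X dX (S k) (Fs k) Hc Hl (xk z k hk0) (tk z k hk0)) as [xi2 [B1 [B2 B3]]].
      { unfold tk. simpl in Ht. lra. }
      exists (xi1, xi2). intro hk. rewrite (proof_irrelevance _ hk hk0). simpl. auto 10.
    - exists ((fun _ => 0), (fun _ => 0)). intro hk. contradiction. }
  set pr := fun k => proj1_sig (constructive_indefinite_description _ (Ex k)).
  exists (fun k => (pr k).1), (fun k => (pr k).2).
  intros k hk. exact (proj2_sig (constructive_indefinite_description _ (Ex k)) hk).
Qed.

Definition Mcell (xi1s xi2s : forall k, Pt X (S k) -> R) (w : Dom X p) : Prop :=
  forall k (hk : lt k p), xi1s k (xk w k hk) < tk w k hk /\ tk w k hk <= xi2s k (xk w k hk).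

Lemma Mcell_mw Fs xi1s xi2s :
  (forall k, lt k p -> Fs k (xi1s k) /\ Fs k (xi2s k)) -> is_multiwedge Fs (Mcell xi1s xi2s).
Proof.
  intro H. exists (fun k x t => xi1s k x < proj1_sig t /\ proj1_sig t <= xi2s k x).
  split.
  - intros k hk. exists (xi1s k), (xi2s k). destruct (H k hk). split; auto. split; auto.
    intros; tauto.
  - intro z. unfold Mcell, xk, tk. tauto.
Qed.

Lemma cell_minimal Fs z xi1s xi2s : famprops Fs -> cellspec Fs z xi1s xi2s ->
  minimal_multiwedge Fs (Mcell xi1s xi2s).
Proof.
  intros HF Hc. split; [|split].
  - apply Mcell_mw. intros k hk. destruct (Hc k hk) as [? [? _]]. auto.
  - exists z. intros k hk. destruct (Hc k hk) as [_ [_ [? [? _]]]]. auto.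
  - intros M' [Cs [HCs HM']] [w Hw] Hsub y Hy.
    destruct (cell_exists Fs HF w) as [xi1w [xi2w Hcw]].
    apply HM'. intros k hk.
    destruct (HCs k hk) as [eta1 [eta2 [Fe1 [Fe2 He]]]]. apply He.
    have Hwk := proj1 (HM' w) Hw k hk. apply He in Hwk. destruct Hwk as [W1 W2].
    destruct (Hc k hk) as [C1 [C2 [C3 [C4 [C5 C6]]]]].
    destruct (Hcw k hk) as [D1 [D2 [D3 [D4 [D5 D6]]]]].
    have Le1 : fle eta1 (xi1w k) by apply D5.
    have Le2 : fle (xi2w k) eta2 by apply D6.
    destruct (HF k hk) as [_ [Lmax [Lmin _]]].
    destruct (Hsub w Hw k hk) as [S1 S2].
    destruct (cell_mono _ (Fs k) Lmax Lmin _ _ _ _ _ _ _ _ C1 C2 C3 C4 C5 C6 D1 D2 D3 D4 S1 S2) as [M1 M2].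
    destruct (Hy k hk) as [Y1 Y2].
    have := Le1 (xk y k hk). have := Le2 (xk y k hk). have := M1 (xk y k hk). have := M2 (xk y k hk).
    unfold xk, tk in *. intros. split; lra.
Qed.

Lemma refine_minimal Fs Hs : famprops Fs ->
  (forall k, lt k p -> l_complete (Hs k) /\ forall xi, Fs k xi -> Hs k xi) ->
  forall M : Dom X p -> Prop, minimal_multiwedge Hs M -> forall z z', M z -> M z' ->
  exists M', minimal_multiwedge Fs M' /\ M' z /\ M' z'.
Proof.
  intros HF HH M [[Cs [HCs HM]] [_ Hmin]] z z' Hz Hz'.
  destruct (cell_exists Fs HF z) as [xi1s [xi2s Hc]].
  exists (Mcell xi1s xi2s). split; [|split].
  - eapply cell_minimal; eauto.
  - intros k hk. destruct (Hc k hk) as [_ [_ [? [? _]]]]. auto.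
  - set M'' := fun w => M w /\ Mcell xi1s xi2s w.
    have Hmw : is_multiwedge Hs M''.
    { exists (fun k x t => Cs k x t /\ (xi1s k x < proj1_sig t /\ proj1_sig t <= xi2s k x)).
      split.
      - intros k hk. destruct (HCs k hk) as [eta1 [eta2 [Fe1 [Fe2 He]]]].
        destruct (HH k hk) as [[Lmax [Lmin _]] Sub].
        destruct (Hc k hk) as [C1 [C2 _]].
        exists (fun x => Rmax (eta1 x) (xi1s k x)), (fun x => Rmin (eta2 x) (xi2s k x)).
        split; [apply Lmax; auto|split; [apply Lmin; auto|]].
        intros x t. rewrite He. unfold Rmax, Rmin.
        destruct (Rle_dec _ _); destruct (Rle_dec _ _); split; intros; lra.
      - intro w. unfold M'', Mcell, xk, tk. rewrite HM. split.
        + intros [A B] k hk. split; auto.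
        + intro A. split; intros k hk; apply A. }
    have Sub : forall w, M w -> M'' w.
    { apply Hmin; auto. exists z. split; auto. intros k hk. destruct (Hc k hk) as [_ [_ [? [? _]]]]. auto.
      intros w [? _]; auto. }
    apply (Sub z' Hz').
Qed.

End Cells.

Lemma layered_comp (X : nat -> Type) (dX : forall i, X i -> X i -> R) (p : nat)
  (V W : Type) (g : Dom X p -> V) (phi : V -> W) :
  layered dX g -> layered dX (fun z => phi (g z)).
Proof.
  intros [Fs [HF Hg]]. exists Fs. split; auto. intros M HM z z' Hz Hz'. f_equal. eapply Hg; eauto.
Qed.

Lemma layered_pair (X : nat -> Type) (dX : forall i, X i -> X i -> R) (p : nat)
  (Hd : forall j (a : X j), lt j p -> dX j a a = 0)
  (V1 V2 W : Type) (g1 : Dom X p -> V1) (g2 : Dom X p -> V2) (phi : V1 -> V2 -> W) :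
  layered dX g1 -> layered dX g2 -> layered dX (fun z => phi (g1 z) (g2 z)).
Proof.
  intros [Fs [HF Hg1]] [Gs [HG Hg2]].
  have Ex : forall k, exists H : (Pt X (S k) -> R) -> Prop, lt k p ->
    cont_dissection dX H /\ l_complete H /\ (forall xi, Fs k xi -> H xi) /\ (forall xi, Gs k xi -> H xi).
  { intro k. destruct (Compare_dec.lt_dec k p) as [hk|nk].
    - have Hd0 : forall j (a : X j), lt j (S k) -> dX j a a = 0.
      { intros j a hj. apply Hd. eapply Nat.lt_le_trans; eauto. }
      destruct (level_refine X dX (S k) Hd0 (Fs k) (Gs k) (proj1 (HF k hk)) (proj1 (HG k hk))) as [H HH].
      exists H. auto.
    - exists (fun _ => True). intro; contradiction. }
  set Hs := fun k => proj1_sig (constructive_indefinite_description _ (Ex k)).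
  have HHs : forall k, lt k p -> cont_dissection dX (Hs k) /\ l_complete (Hs k) /\
      (forall xi, Fs k xi -> Hs k xi) /\ (forall xi, Gs k xi -> Hs k xi).
  { intros k hk. exact (proj2_sig (constructive_indefinite_description _ (Ex k)) hk). }
  exists Hs. split.
  - intros k hk. destruct (HHs k hk) as [? [? _]]. auto.
  - intros M HM z z' Hz Hz'.
    destruct (refine_minimal X dX p Hd Fs Hs HF) with (M := M) (z := z) (z' := z') as [M1 [HM1 [A1 B1]]]; auto.
    { intros k hk. destruct (HHs k hk) as [? [? [? ?]]]. auto. }
    destruct (refine_minimal X dX p Hd Gs Hs HG) with (M := M) (z := z) (z' := z') as [M2 [HM2 [A2 B2]]]; auto.
    { intros k hk. destruct (HHs k hk) as [? [? [? ?]]]. auto. }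
    rewrite (Hg1 M1 HM1 z z' A1 B1) (Hg2 M2 HM2 z z' A2 B2). reflexivity.
Qed.

Section Grp.
Import GRing.Theory.
Local Open Scope ring_scope.
Variables (A Q : zmodType) (pi : A -> Q).
Hypothesis Hadd : forall a b, pi (GRing.add a b) = GRing.add (pi a) (pi b).

Lemma pi0 : pi 0 = 0.
Proof.
  have h := Hadd 0 0. rewrite addr0 in h.
  have := congr1 (fun x => x - pi 0) h. by rewrite /= addrK subrr => ->.
Qed.

Lemma piN a : pi (- a) = - pi a.
Proof.
  have h := Hadd a (- a). rewrite subrr pi0 in h.
  apply: (@addrI _ (pi a)). by rewrite subrr h.
Qed.

Lemma piB a b : pi (a - b) = pi a - pi b.
Proof. by rewrite Hadd piN. Qed.

Lemma addsubK (a b : A) : b + (a - b) = a.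
Proof. by rewrite addrC subrK. Qed.

Lemma sub_same (a : A) : a - a = 0.
Proof. exact: subrr. Qed.

Lemma zero_sub (a : A) : 0 - a = - a.
Proof. exact: add0r. Qed.

Lemma subr0_eqQ (q q' : Q) : q - q' = 0 -> q = q'.
Proof. exact: subr0_eq. Qed.

Lemma oppr0_eqQ (q : Q) : - q = 0 -> q = 0.
Proof. move=> h. by rewrite -(opprK q) h oppr0. Qed.

End Grp.

Lemma half_pos n : 0 < (/2) ^ n.
Proof. apply pow_lt. lra. Qed.

Lemma half_small y : 0 < y -> exists N, (/2) ^ N < y.
Proof.
  intro hy. destruct (pow_lt_1_zero (/2)) with (y := y) as [N HN]; auto.
  rewrite Rabs_right; lra.
  exists N. specialize (HN N (le_n N)). rewrite Rabs_right in HN; auto.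
  left; apply half_pos.
Qed.

Lemma half_mono n m : le n m -> (/2) ^ m <= (/2) ^ n.
Proof.
  intro H. induction H. lra. simpl. have := half_pos m. lra.
Qed.

Lemma le_eps (a b : R) : (forall eps, 0 < eps -> a < b + eps) -> a <= b.
Proof. intro H. apply Rnot_lt_le. intro C. specialize (H (a - b)). lra. Qed.

Section QD.
Variables (A Q : zmodType) (d : A -> A -> R) (B : A -> Prop) (pi : A -> Q).
Hypothesis Hm : is_metric d.
Hypothesis Hinv : forall x y z : A, d (GRing.add x z) (GRing.add y z) = d x y.
Hypothesis Hpi : quotient_map B pi.

Lemma qd_sym q q' e : qdist_lt d pi q q' e -> qdist_lt d pi q' q e.
Proof.
  intros [a [a' [P1 [P2 D]]]]. exists a', a. split; auto. split; auto.
  destruct Hm as [_ [_ [Hs _]]]. rewrite Hs; auto.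
Qed.

Lemma qd_mono q q' e e' : e <= e' -> qdist_lt d pi q q' e -> qdist_lt d pi q q' e'.
Proof. intros H [a [a' [P1 [P2 D]]]]. exists a, a'. split; auto. split; auto. lra. Qed.

Lemma qd_of_d a a' e : d a a' < e -> qdist_lt d pi (pi a) (pi a') e.
Proof. intro H. exists a, a'. auto. Qed.

Lemma qd_lift a q1 q3 e : pi a = q1 -> qdist_lt d pi q1 q3 e ->
  exists a', pi a' = q3 /\ d a a' < e.
Proof.
  intros Ha [b1 [b3 [P1 [P3 D]]]]. destruct Hpi as [Hadd _].
  exists (GRing.add b3 (GRing.add a (GRing.opp b1))). split.
  - rewrite Hadd (piB _ _ pi Hadd) Ha P1 P3 (sub_same Q). exact: GRing.addr0.
  - rewrite -{1}(addsubK _ a b1) Hinv. auto.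
Qed.

Lemma qd_tri q1 q2 q3 e1 e2 : qdist_lt d pi q1 q2 e1 -> qdist_lt d pi q2 q3 e2 ->
  qdist_lt d pi q1 q3 (e1 + e2).
Proof.
  intros [a1 [a2 [P1 [P2 D1]]]] H2.
  destruct (qd_lift a2 q2 q3 e2 P2 H2) as [a3 [P3 D3]].
  exists a1, a3. split; auto. split; auto.
  destruct Hm as [_ [_ [_ Ht]]]. eapply Rle_lt_trans; [apply (Ht _ a2)|]. lra.
Qed.

Lemma qd_zero (HB : closed_subgroup d B) q q' :
  (forall e, 0 < e -> qdist_lt d pi q q' e) -> q = q'.
Proof.
  intro H. destruct Hpi as [Hadd [_ Hker]]. destruct HB as [_ [_ Hcl]].
  have Hs : forall n, exists pr : A * A, pi pr.1 = q /\ pi pr.2 = q' /\ d pr.1 pr.2 < (/2) ^ n.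
  { intro n. destruct (H _ (half_pos n)) as [a [a' [P1 [P2 D]]]]. exists (a, a'). auto. }
  set pr := fun n => proj1_sig (constructive_indefinite_description _ (Hs n)).
  have Hpr : forall n, pi (pr n).1 = q /\ pi (pr n).2 = q' /\ d (pr n).1 (pr n).2 < (/2) ^ n.
  { intro n. exact (proj2_sig (constructive_indefinite_description _ (Hs n))). }
  set c := fun n => GRing.add (pr n).1 (GRing.opp (pr n).2).
  have Pc : forall n, pi (c n) = GRing.add q (GRing.opp q').
  { intro n. destruct (Hpr n) as [E1 [E2 _]]. rewrite /c (piB _ _ pi Hadd) E1 E2. reflexivity. }
  have Dc : forall n, d (c n) GRing.zero < (/2) ^ n.
  { intro n. destruct (Hpr n) as [_ [_ D]]. rewrite /c -(sub_same _ (pr n).2) Hinv. auto. }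
  have Bu : forall n, B (GRing.add (c n) (GRing.opp (c 0%nat))).
  { intro n. apply Hker. rewrite (piB _ _ pi Hadd) !Pc. apply sub_same. }
  have Bl : B (GRing.opp (c 0%nat)).
  { apply (Hcl _ _ Bu). intros eps He. destruct (half_small eps He) as [N HN].
    exists N. intros n Hn. cbv beta.
    have E := Hinv (c n) GRing.zero (GRing.opp (c 0%nat)). rewrite (zero_sub _ (c 0%nat)) in E. rewrite E.
    eapply Rlt_le_trans; [apply Dc|]. apply Rle_trans with ((/2) ^ N); [|lra].
    apply half_mono. apply/leP. exact Hn. }
  apply Hker in Bl. rewrite (piN _ _ pi Hadd) in Bl. apply oppr0_eqQ in Bl.
  rewrite Pc in Bl. apply subr0_eqQ. exact Bl.
Qed.

End QD.

Fixpoint iterseq (D A : Type) (s0 : D -> A) (step : nat -> A -> D -> A) (n : nat) : D -> A :=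
  match n with
  | O => s0
  | S m => fun z => step m (iterseq D A s0 step m z) z
  end.

Theorem proposition6p4
  (X : nat -> Type) (dX : forall i : nat, X i -> X i -> R) (p : nat)
  (HX : forall i : nat, lt i p -> is_metric (dX i))
  (A Q : zmodType) (d : A -> A -> R) (B : A -> Prop) (pi : A -> Q)
  (HA : polish_ab_metric d) (HB : closed_subgroup d B)
  (Hpi : quotient_map B pi)
  (f : Dom X p -> Q) (Hf : almost_layered_q dX d pi f) :
  exists F : Dom X p -> A,
    almost_layered dX d F /\ forall z : Dom X p, pi (F z) = f z.
Proof.
  destruct HA as [Hm [Hinv [Hcomp _]]].
  have Hm' := Hm. destruct Hm' as [Dpos [Dzero [Dsym Dtri]]].
  have Dxx : forall a, d a a = 0 by intro a; apply Dzero.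
  have Hd : forall j (a : X j), lt j p -> dX j a a = 0.
  { intros j a hj. destruct (HX j hj) as [_ [Hz _]]. apply Hz. reflexivity. }
  have Hgs : forall n, exists g, layered dX g /\ forall z, qdist_lt d pi (f z) (g z) ((/2) ^ n).
  { intro n. apply Hf. apply half_pos. }
  set gs := fun n => proj1_sig (constructive_indefinite_description _ (Hgs n)).
  have Hg : forall n, layered dX (gs n) /\ forall z, qdist_lt d pi (f z) (gs n z) ((/2) ^ n).
  { intro n. exact (proj2_sig (constructive_indefinite_description _ (Hgs n))). }
  have Hsurj := proj1 (proj2 Hpi).
  set s := fun q => proj1_sig (constructive_indefinite_description _ (Hsurj q)).
  have Hs : forall q, pi (s q) = q.
  { intro q. exact (proj2_sig (constructive_indefinite_description _ (Hsurj q))). }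
  set phi := fun (n : nat) (a : A) (q : Q) =>
    epsilon (inhabits a) (fun a' => pi a' = q /\ d a a' < 2 * (/2) ^ n).
  set Fseq := iterseq (Dom X p) A (fun z => s (gs 0%nat z)) (fun m a z => phi m a (gs (S m) z)).
  have Step : forall n z, pi (Fseq n z) = gs n z ->
    pi (Fseq (S n) z) = gs (S n) z /\ d (Fseq n z) (Fseq (S n) z) < 2 * (/2) ^ n.
  { intros n z Hn.
    have Q1 : qdist_lt d pi (gs n z) (gs (S n) z) (2 * (/2) ^ n).
    { apply qd_mono with ((/2) ^ n + (/2) ^ (S n)).
      simpl. have := half_pos n. lra.
      apply (qd_tri A Q d B pi Hm Hinv Hpi) with (q2 := f z). apply qd_sym; auto. apply Hg. apply Hg. }
    destruct (qd_lift A Q d B pi Hinv Hpi _ _ _ _ Hn Q1) as [a' Ha'].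
    have := epsilon_spec (inhabits (Fseq n z))
      (fun a' => pi a' = gs (S n) z /\ d (Fseq n z) a' < 2 * (/2) ^ n) (ex_intro _ a' Ha').
    simpl. auto. }
  have Inv : forall n, layered dX (Fseq n) /\ forall z, pi (Fseq n z) = gs n z.
  { induction n as [|n [IHl IHp]].
    - split. apply (layered_comp X dX p Q A (gs 0%nat) s). apply Hg. intro z. apply Hs.
    - split.
      + change (layered dX (fun z => phi n (Fseq n z) (gs (S n) z))).
        apply layered_pair; auto. apply Hg.
      + intro z. apply (Step n z (IHp z)). }
  have Dstep : forall n z, d (Fseq n z) (Fseq (S n) z) < 2 * (/2) ^ n.
  { intros n z. apply (Step n z (proj2 (Inv n) z)). }
  have Cb : forall z n m, d (Fseq n z) (Fseq (n + m)%coq_nat z) <= 4 * (/2) ^ n - 4 * (/2) ^ (n + m)%coq_nat.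
  { intros z n m. induction m as [|m IH].
    - rewrite Nat.add_0_r Dxx. lra.
    - rewrite Nat.add_succ_r. eapply Rle_trans; [apply (Dtri _ (Fseq (n + m)%coq_nat z))|].
      have := Dstep (n + m)%coq_nat z. simpl. lra. }
  have Cb2 : forall z N m, (N <= m)%nat -> d (Fseq N z) (Fseq m z) <= 4 * (/2) ^ N.
  { intros z N m H. rewrite -(subnKC H). have := Cb z N (m - N)%nat.
    have := half_pos (N + (m - N))%coq_nat. intros. 
    change (addn N (m - N)) with (N + (m - N))%coq_nat. lra. }
  have Hcs : forall z, cauchy_seq d (fun n => Fseq n z).
  { intros z eps He. destruct (half_small (eps / 8)) as [N HN]. lra.
    exists N. intros m n Hm1 Hn1. eapply Rle_lt_trans; [apply (Dtri _ (Fseq N z))|].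
    rewrite Dsym. have := Cb2 z N m Hm1. have := Cb2 z N n Hn1. lra. }
  set Fl := fun z => proj1_sig (constructive_indefinite_description _ (Hcomp _ (Hcs z))).
  have HFl : forall z, seq_lim d (fun n => Fseq n z) (Fl z).
  { intro z. exact (proj2_sig (constructive_indefinite_description _ (Hcomp _ (Hcs z)))). }
  have Dl : forall z n, d (Fseq n z) (Fl z) <= 4 * (/2) ^ n.
  { intros z n. apply le_eps. intros eps He. destruct (HFl z eps He) as [N' HN'].
    eapply Rle_lt_trans; [apply (Dtri _ (Fseq (n + N')%nat z))|].
    have := Cb2 z n (n + N')%nat (leq_addr _ _). have := HN' (n + N')%nat (leq_addl _ _). lra. }
  exists Fl. split.
  - intros eps He. destruct (half_small (eps / 4)) as [N HN]. lra.
    exists (Fseq N). split. apply Inv.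
    intro z. rewrite Dsym. have := Dl z N. lra.
  - intro z. symmetry. apply (qd_zero A Q d B pi Hinv Hpi HB).
    intros eps He. destruct (half_small (eps / 6)) as [N HN]. lra.
    apply qd_mono with ((/2) ^ N + 5 * (/2) ^ N). lra.
    apply (qd_tri A Q d B pi Hm Hinv Hpi) with (q2 := gs N z). apply Hg.
    rewrite -(proj2 (Inv N) z). apply qd_of_d. have := Dl z N. have := half_pos N. lra.
Qed.
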